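(* Consider a CPM scheme with alphabet size $M>2$, impulse length $L$ and modulation index $h=Q/P$ ($Q,P$ relatively prime positive integers). Suppose that every difference sequence $\mathbf{b}$ achieving the minimum Euclidean distance of the scheme has length $\Delta(\mathbf{b})=2$ and $b_2=\pm1$, and that $P$ is a multiple of $M$. Then there exists a partition of the set of trellis edges into $M$ sets $\mathcal{T}(0),\dots,\mathcal{T}(M-1)$, each of cardinality $PM^{L-1}$, such that (i) for every difference sequence $\mathbf{b}$ achieving the minimum Euclidean distance, any two edges adjacent in $\mathcal{G}(\mathbf{b})$ lie in the same set, and (ii) any two distinct edges leaving the same trellis state lie in different sets.
   Context: CPM trellis (Rimoldi decomposition). Fix $M\ge2$, $L\ge1$, relatively prime positive integers $Q,P$, $h=Q/P$. Input symbols $a_n\in\{0,\dots,M-1\}$. The state at time $n$ is $(a_{n-L+1},\dots,a_{n-1};\beta_n)$ with $\beta_n\in\{0,\dots,P-1\}$ and $\beta_{n+1}=(\beta_n+Qa_{n-L+1})_P$ ($(l)_P$ = $l$ mod $P$). A trellis edge is $(\boldsymbol{\alpha},\beta)$, $\boldsymbol{\alpha}=(\alpha_1,\dots,\alpha_L)\in\{0,\dots,M-1\}^L$, $\beta$ the phase of its starting state $((\alpha_1,\dots,\alpha_{L-1});\beta)$; its ending state is $((\alpha_2,\dots,\alpha_L);(\beta+Q\alpha_1)_P)$. There are $PM^L$ edges. CPM signal: an input sequence $(a_n)$ produces $x(t)=\exp\!\big(j\,2\pi h\sum_n(2a_n-(M-1))\,q(t-nT)\big)$ (up to a constant amplitude),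 where $T>0$ and the phase pulse $q$ is continuous with $q(t)=0$ for $t\le0$ and $q(t)=1/2$ for $t\ge LT$. A difference sequence is $\mathbf{b}=(b_1,\dots,b_\Delta)$ with entries in $\{-(M-1),\dots,M-1\}$, $b_1\ne0$, $b_\Delta\ne0$, admitting error events (i.e. $\sum_n b_n\equiv0\pmod P$); $\Delta(\mathbf{b})=\Delta$. An error event generated by $\mathbf{b}$ is a pair of trellis paths from a common starting state with inputs $a^{(1)},a^{(2)}$ such that $a^{(1)}_n-a^{(2)}_n=b_n$ for $1\le n\le\Delta$ and equal inputs afterwards, merging after $\Delta+L-1$ steps; an edge pair is the two edges at the same step. The squared Euclidean distance $\int|x^{(1)}(t)-x^{(2)}(t)|^2dt$ of an error event depends only on $\mathbf{b}$; the minimum Euclidean distance of the scheme is its minimum over all difference sequences. Graph $\mathcal{G}(\mathbf{b})$: vertices are trellis edges; two vertices are adjacent iff the edges have different starting states and form an edge pair of some error event generated by $\mathbf{b}$. *)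

(* Defs.v *)
From HB Require Import structures.
From mathcomp Require Import all_boot all_order all_algebra.
From mathcomp Require Import all_classical all_reals all_analysis.
Set Implicit Arguments. Unset Strict Implicit. Unset Printing Implicit Defensive.
Import Order.TTheory GRing.Theory Num.Theory.
Import numFieldNormedType.Exports.
Local Open Scope ring_scope.

(* A trellis edge (alpha, beta): alpha = (alpha_1,...,alpha_L) in {0..M-1}^L,
   beta in {0..P-1} the phase of its starting state. *)
Definition edge (M L P : nat) : finType := (L.-tuple 'I_M * 'I_P)%type.

(* Trellis states ((s_1,...,s_{L-1}); beta), represented as a pair
   (sequence of symbols, phase). *)
Definition state (M : nat) := (seq 'I_M * nat)%type.

Definition start_state (M L P : nat) (e : edge M L P) : state M :=
  (take L.-1 (tval e.1), val e.2).

Definition end_state (M L P Q : nat) (e : edge M L P) : state M :=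
  (drop 1 (tval e.1), ((val e.2 + Q * head 0%N (map val (tval e.1))) %% P)%N).

Definition input (M L P : nat) (e : edge M L P) : nat :=
  last 0%N (map val (tval e.1)).

Definition trellis_path (M L P Q : nat) (p : seq (edge M L P)) : bool :=
  sorted (fun e e' => end_state Q e == start_state e') p.

(* b = (b_1,...,b_Delta) (stored 0-indexed), entries in {-(M-1),...,M-1},
   b_1 <> 0, b_Delta <> 0, and sum b_n = 0 mod P. *)
Definition diff_seq (M P : nat) (b : seq int) : Prop :=
  [/\ (0 < size b)%N,
      all (fun x : int => `|x| <= (M.-1)%:Z) b,
      head 0 b != 0, last 0 b != 0 &
      (P%:Z %| \sum_(x <- b) x)%Z].

(* An error event generated by b: two trellis paths of Delta + L - 1 steps,
   from a common starting state, with inputs a1_n - a2_n = b_n for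
   1 <= n <= Delta, equal inputs afterwards, merging after Delta+L-1 steps. *)
Definition error_event (M L P Q : nat) (b : seq int)
    (p1 p2 : seq (edge M L P)) : Prop :=
  let D := size b in
  [/\ size p1 = (D + L - 1)%N /\ size p2 = (D + L - 1)%N,
      trellis_path Q p1 /\ trellis_path Q p2,
      omap (@start_state M L P) (ohead p1) = omap (@start_state M L P) (ohead p2),
      omap (@end_state M L P Q) (ohead (rev p1))
        = omap (@end_state M L P Q) (ohead (rev p2)) &
      (
      (forall k, (k < D)%N ->
         (nth 0%N (map (@input M L P) p1) k)%:Z
           - (nth 0%N (map (@input M L P) p2) k)%:Z = nth 0 b k) /\
      (forall k, (D <= k < D + L - 1)%N ->
         nth 0%N (map (@input M L P) p1) k = nth 0%N (map (@input M L P) p2) k))].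

(* Adjacency in the graph G(b): the two edges have different starting states
   and form an edge pair (edges at the same step) of some error event
   generated by b. *)
Definition G_adj (M L P Q : nat) (b : seq int) (e e' : edge M L P) : Prop :=
  start_state e <> start_state e' /\
  exists p1 p2 k, error_event Q b p1 p2 /\
    onth p1 k = Some e /\ onth p2 k = Some e'.

(* Phase difference between the two CPM signals of an error event generated
   by b (inputs a1, a2 with a1_n - a2_n = b_n):
   2 pi h sum_n (2 a1_n - (M-1)) q(t-nT) - 2 pi h sum_n (2 a2_n - (M-1)) q(t-nT)
   = 2 pi h sum_{n=1}^{Delta} 2 b_n q(t - nT),  with h = Q/P. *)
Definition phase_diff (R : realType) (Q P : nat) (T : R) (q : R -> R)
    (b : seq int) (t : R) : R :=
  2 * pi * (Q%:R / P%:R) *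
    \sum_(i < size b) (2 * (nth 0 b i)%:~R * q (t - (i.+1)%:R * T)).

(* Squared Euclidean distance int |x1(t) - x2(t)|^2 dt of an error event
   generated by b; |x1 - x2|^2 = |1 - exp(j phase_diff)|^2
   = (1 - cos phase_diff)^2 + (sin phase_diff)^2 (common unimodular factor
   cancels). *)
Definition sq_dist (R : realType) (Q P : nat) (T : R) (q : R -> R)
    (b : seq int) : \bar R :=
  (\int[@lebesgue_measure R]_t
     (((1 - cos (phase_diff Q P T q b t)) ^+ 2
        + (sin (phase_diff Q P T q b t)) ^+ 2)%:E))%E.

Definition achieves_min (R : realType) (M Q P : nat) (T : R) (q : R -> R)
    (b : seq int) : Prop :=
  diff_seq M P b /\
  forall b', diff_seq M P b' -> (sq_dist Q P T q b <= sq_dist Q P T q b')%E.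

(* Main.v *)
Require Import Defs.
From HB Require Import structures.
From mathcomp Require Import all_boot all_order all_algebra.
From mathcomp Require Import all_classical all_reals all_analysis.
From mathcomp Require Import zify ring.
Import Order.TTheory GRing.Theory Num.Theory.
Import numFieldNormedType.Exports.
Local Open Scope ring_scope.
Set Implicit Arguments. Unset Strict Implicit. Unset Printing Implicit Defensive.

Definition phi (M L P Q : nat) (e : edge M L P) : nat :=
  (val e.2 + Q * sumn (map val (tval e.1)))%N.

Lemma sumn_last (s : seq nat) n : size s = n.+1 ->
  sumn s = (sumn (take n s) + last 0%N s)%N.
Proof.
case/lastP: s => [|t x] //=; rewrite size_rcons => -[<-].
by rewrite -cats1 take_size_cat // sumn_cat last_cat /= addn0.
Qed.

Lemma seq_last (s : seq nat) n : size s = n.+1 ->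
  s = rcons (take n s) (last 0%N s).
Proof.
case/lastP: s => [|t x] //=; rewrite size_rcons => -[<-].
by rewrite -!cats1 take_size_cat // last_cat.
Qed.

Lemma start_phi (M L P Q : nat) (e e' : edge M L P) : (1 <= L)%N ->
  start_state e = start_state e' ->
  (phi Q e)%:Z - (phi Q e')%:Z = Q%:Z * ((input e)%:Z - (input e')%:Z).
Proof.
move=> HL [Ht Hb]; rewrite /phi /input /=.
have sz : forall f : edge M L P, size (map val (tval f.1)) = L.-1.+1.
  by move=> f; rewrite size_map size_tuple prednK.
rewrite (sumn_last (sz e)) (sumn_last (sz e')) -!map_take Ht.
rewrite Hb !PoszD !PoszM !PoszD; ring.
Qed.

Lemma step_phi (M L P Q : nat) (e e' : edge M L P) : (1 <= L)%N ->
  end_state Q e == start_state e' ->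
  (P%:Z %| (phi Q e')%:Z - (phi Q e)%:Z - Q%:Z * (input e')%:Z)%Z.
Proof.
move=> HL /eqP [Hd Hb]; rewrite /phi /input /= -Hb.
have sz : size (map val (tval e'.1)) = L.-1.+1.
  by rewrite size_map size_tuple prednK.
rewrite (sumn_last sz) -map_take -Hd map_drop.
have : (0 < size (map val (tval e.1)))%N by rewrite size_map size_tuple.
case: (map val (tval e.1)) => [|h t] //= _; rewrite drop0.
set n := (val e.2 + Q * h)%N.
have Hn := divn_eq n P.
have -> : (((n %% P)%N + Q * (sumn t + last 0%N [seq val i | i <- tval e'.1]))%N)%:Z
   - ((val e.2 + Q * (h + sumn t))%N)%:Z
   - Q%:Z * (last 0%N [seq val i | i <- tval e'.1])%:Z
   = - (n %/ P)%N%:Z * P%:Z.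
  have E : ((n %% P)%N)%:Z = (val e.2)%:Z + Q%:Z * h%:Z - ((n %/ P)%N)%:Z * P%:Z.
    have : n%:Z = ((n %/ P)%N)%:Z * P%:Z + (n %% P)%N%:Z by rewrite {1}Hn PoszD PoszM.
    rewrite {1}/n PoszD PoszM => ->; ring.
  rewrite PoszD E !PoszM !PoszD !PoszM; ring.
exact/dvdz_mull/dvdzz.
Qed.

Lemma path_claim (M L P Q : nat) (p1 p2 : seq (edge M L P)) (x0 : edge M L P) :
  (1 <= L)%N -> trellis_path Q p1 -> trellis_path Q p2 -> size p1 = size p2 ->
  start_state (nth x0 p1 0) = start_state (nth x0 p2 0) ->
  forall k, (k < size p1)%N ->
  (P%:Z %| (phi Q (nth x0 p1 k))%:Z - (phi Q (nth x0 p2 k))%:Z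
     - Q%:Z * \sum_(j < k.+1) ((nth 0%N (map (@input M L P) p1) j)%:Z
                              - (nth 0%N (map (@input M L P) p2) j)%:Z))%Z.
Proof.
move=> HL /(sortedP x0) t1 /(sortedP x0) t2 Hs H0; elim=> [|k IH] Hk.
  rewrite big_ord1 /= (nth_map x0) // (nth_map x0) -?Hs // (start_phi Q HL H0).
  by rewrite subrr dvdz0.
have Hk' : (k < size p1)%N by apply: ltnW.
have S1 := step_phi HL (t1 k Hk).
have S2 := step_phi HL (t2 k (leq_trans Hk (eq_leq Hs))).
have I := IH Hk'.
rewrite big_ord_recr /= (nth_map x0) // (nth_map x0) -?Hs //.
set A := \sum_(j < k.+1) _ in I *.
set u1 := (phi Q (nth x0 p1 k.+1))%:Z in S1 *.
set u2 := (phi Q (nth x0 p2 k.+1))%:Z in S2 *.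
set v1 := (phi Q (nth x0 p1 k))%:Z in S1 I *.
set v2 := (phi Q (nth x0 p2 k))%:Z in S2 I *.
set i1 := (input (nth x0 p1 k.+1))%:Z in S1 *.
set i2 := (input (nth x0 p2 k.+1))%:Z in S2 *.
have -> : u1 - u2 - Q%:Z * (A + (i1 - i2)) =
   (v1 - v2 - Q%:Z * A) + (u1 - v1 - Q%:Z * i1) - (u2 - v2 - Q%:Z * i2) by ring.
by rewrite rpredB // rpredD.
Qed.

Lemma input_lt (M L P : nat) (e : edge M L P) : (0 < M)%N -> (input e < M)%N.
Proof.
move=> HM; rewrite /input -[X in last X _]/(nat_of_ord (Ordinal HM)) last_map.
exact: ltn_ord.
Qed.

Lemma distinct_part (M L P Q : nat) (e e' : edge M L P) :
  (1 <= L)%N -> (0 < M)%N -> coprime M Q -> e != e' ->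
  start_state e = start_state e' -> (phi Q e %% M != phi Q e' %% M)%N.
Proof.
move=> HL HM cMQ Hne Hst.
have E := start_phi Q HL Hst.
apply/negP => /eqP Heq; move: Hne; apply/negP; rewrite negbK.
have D : (M%:Z %| (phi Q e)%:Z - (phi Q e')%:Z)%Z.
  by rewrite -eqz_mod_dvd !modz_nat Heq.
rewrite E Gauss_dvdzr in D; last by [].
have a1 := input_lt e HM; have a2 := input_lt e' HM.
have Hin : input e = input e'.
  move: D; rewrite dvdzE /=.
  case: (ltngtP (input e) (input e')) => // H; move/dvdn_leq; lia.
case: Hst => Ht Hb.
have sz : forall f : edge M L P, size (map val (tval f.1)) = L.-1.+1.
  by move=> f; rewrite size_map size_tuple prednK.
have H1 : e.1 = e'.1.
  apply/val_inj/(inj_map val_inj).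
  rewrite (seq_last (sz e)) (seq_last (sz e')) -!map_take Ht.
  by move: Hin; rewrite /input => ->.
have H2 : e.2 = e'.2 by apply/val_inj.
by case: e e' H1 H2 {E D Heq Ht Hb sz a1 a2 Hin} => [? ?] [? ?] /= -> ->.
Qed.

Lemma adj_same (M L P Q : nat) (b : seq int) (e e' : edge M L P) :
  (1 <= L)%N -> (M %| P)%N -> size b = 2%N -> diff_seq M P b ->
  G_adj Q b e e' -> (phi Q e %% M = phi Q e' %% M)%N.
Proof.
move=> HL MP Hb [_ _ _ _ Psum] [Hneq [p1 [p2 [k HH]]]]; case: HH => Hev [Ho1 Ho2].
case: Hev => [[s1 s2] [t1 t2] hs _ [hin1 hin2]].
rewrite Hb in s1 s2 hin1 hin2.
have Hk : (k < size p1)%N by rewrite -onthTE Ho1.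
have E1 := @onth_nth _ e e p1 k Ho1; have E2 := @onth_nth _ e e' p2 k Ho2.
have H0 : start_state (nth e p1 0) = start_state (nth e p2 0).
  have ne1 : (0 < size p1)%N by rewrite s1; lia.
  have ne2 : (0 < size p2)%N by rewrite s2; lia.
  move: hs ne1 ne2; rewrite !nth0; case: (p1) => [|a1 q1]; case: (p2) => [|a2 q2] //= => H _ _; move: H; rewrite /start_state /=; by case=> -> ->.
have Hs : size p1 = size p2 by rewrite s1 s2.
have C := path_claim HL t1 t2 Hs H0 Hk.
rewrite E1 E2 in C.
have k0 : k <> 0%N by move=> k0; apply: Hneq; rewrite -E1 -E2 k0.
set d := fun j : 'I_k.+1 => _ in C.
have Hsum : forall m, (1 <= m)%N -> (m < size p1)%N ->
   \sum_(j < m.+1) ((nth 0%N (map (@input M L P) p1) j)%:Z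
                   - (nth 0%N (map (@input M L P) p2) j)%:Z) = nth 0 b 0 + nth 0 b 1.
  elim=> [//|m IH] _ Hm.
  rewrite big_ord_recr /=.
  case: m IH Hm => [|m] IH Hm.
    by rewrite big_ord1 /= !hin1.
  rewrite IH //; last by apply: ltnW.
  rewrite hin2; first by rewrite subrr addr0.
  rewrite s1 in Hm; apply/andP; split; lia.
rewrite /d Hsum in C; last by [].
  2: lia.
have Pb : (P%:Z %| nth 0 b 0 + nth 0 b 1)%Z.
  move: Psum; case: b Hb {hin1 hin2 C Hsum d} => [|b0 [|b1 [|]]] //= _.
  by rewrite !big_cons big_nil addr0.
have DP : (P%:Z %| (phi Q e)%:Z - (phi Q e')%:Z)%Z.
  have -> : (phi Q e)%:Z - (phi Q e')%:Z =
     ((phi Q e)%:Z - (phi Q e')%:Z - Q%:Z * (nth 0 b 0 + nth 0 b 1))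
     + Q%:Z * (nth 0 b 0 + nth 0 b 1) by ring.
  by rewrite rpredD // dvdz_mull.
have DM : (M%:Z %| (phi Q e)%:Z - (phi Q e')%:Z)%Z.
  by apply: dvdz_trans DP; rewrite dvdzE.
apply/eqP; rewrite -eqz_nat -!modz_nat eqz_mod_dvd //.
Qed.

Lemma card_part (M L P : nat) (part : edge M L P -> 'I_M) :
  (1 <= L)%N -> (0 < M)%N ->
  (forall e e', e != e' -> start_state e = start_state e' -> part e != part e') ->
  forall i, #|[set e | part e == i]| = (P * M ^ L.-1)%N.
Proof.
move=> HL HM Hpart.
pose x0 : 'I_M := Ordinal HM.
have le : forall i, (#|[set e | part e == i]| <= P * M ^ L.-1)%N.
  move=> i.
  pose f (e : edge M L P) : ({ffun 'I_L.-1 -> 'I_M} * 'I_P)%type :=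
    ([ffun j => tnth e.1 (widen_ord (leq_pred L) j)], e.2).
  rewrite -(@card_in_imset _ _ f).
    apply: leq_trans (max_card _) _.
    by rewrite card_prod card_ffun !card_ord mulnC.
  move=> x y; rewrite !inE => /eqP Hx /eqP Hy [Hf H2].
  apply/eqP/negPn/negP => Hne.
  suff Hst : start_state x = start_state y by move: (Hpart x y Hne Hst); rewrite Hx Hy eqxx.
  rewrite /start_state H2; congr pair.
  apply: (@eq_from_nth _ x0); first by rewrite !size_take !size_tuple.
  move=> j; rewrite size_take size_tuple => Hj.
  have Hj' : (j < L.-1)%N by move: Hj; rewrite ltn_predL HL.
  rewrite !(nth_take x0 Hj').
  have := congr1 (fun g : {ffun 'I_L.-1 -> 'I_M} => g (Ordinal Hj')) Hf; rewrite !ffunE.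
  by rewrite !(tnth_nth x0).
have tot : (\sum_(i : 'I_M) #|[set e | part e == i]| = M * (P * M ^ L.-1))%N.
  transitivity (\sum_(i : 'I_M) \sum_(e | part e == i) 1)%N.
    by apply: eq_bigr => i _; rewrite -sum1_card; apply: eq_bigl => e; rewrite inE.
  have HP : (\sum_(e : edge M L P) 1 = \sum_(i : 'I_M) \sum_(e | part e == i) 1)%N.
    by rewrite (partition_big part predT).
  rewrite -HP sum1_card /edge card_prod card_tuple !card_ord.
  by case: (L) HL => // l _; rewrite expnS /=; ring.
move=> i; apply/eqP; rewrite eqn_leq le /= leqNgt; apply/negP => lt.
move: tot; rewrite (bigD1 i) //=.
have : (\sum_(j | j != i) #|[set e | part e == j]| <= \sum_(j | j != i) (P * M ^ L.-1))%N.
  by apply: leq_sum => j _.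
rewrite sum_nat_const cardC1 card_ord.
move: lt; set N := (P * M ^ L.-1)%N; set S := #|_|; set T := (\sum_(j | _) _)%N.
move=> lt1 le1 eq1.
have : (M * N = N + M.-1 * N)%N by rewrite -mulSn prednK.
lia.
Qed.

Theorem proposition4 (R : realType) (M L Q P : nat) (T : R) (q : R -> R) :
  (2 < M)%N -> (1 <= L)%N -> (0 < Q)%N -> (0 < P)%N -> coprime Q P ->
  0 < T -> continuous q ->
  (forall t, t <= 0 -> q t = 0) ->
  (forall t, L%:R * T <= t -> q t = 1 / 2) ->
  (forall b, achieves_min M Q P T q b ->
     size b = 2%N /\ (nth 0 b 1 = 1 \/ nth 0 b 1 = -1)) ->
  (M %| P)%N ->
  exists part : edge M L P -> 'I_M,
    [/\ forall i : 'I_M, #|[set e | part e == i]| = (P * M ^ L.-1)%N,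
        forall b, achieves_min M Q P T q b ->
          forall e e', G_adj Q b e e' -> part e = part e' &
        forall e e' : edge M L P, e != e' -> start_state e = start_state e' ->
          part e != part e'].
Proof.
move=> HM2 HL HQ HP cQP HT hq q0 q1 Hmin MP.
have HM : (0 < M)%N by apply: leq_trans HM2.
have cMQ : coprime M Q by rewrite coprime_sym (coprime_dvdr MP cQP).
exists (fun e => Ordinal (ltn_pmod (phi Q e) HM)); split.
- apply: card_part => // e e' Hne Hst; rewrite -val_eqE /=.
  exact: distinct_part.
- move=> b Hb e e' Hadj; apply: val_inj => /=.
  have [s _] := Hmin b Hb.
  exact: (adj_same HL MP s Hb.1 Hadj).
- move=> e e' Hne Hst; rewrite -val_eqE /=; exact: distinct_part.
Qed.
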